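(* Assume the Riccati solution $\bar{\mathbf{P}}_{1:s}$ exists and $\bar{\mathbf{P}}_i \succ 0$ for all $i$. Then, (i) there exists a unique Riccati solution $\hat{\mathbf{P}}_{1:r}$ in $\mathbb{S}_r^+$; (ii) $\hat{\mathbf{P}}_k = \bar{\mathbf{P}}_i$ and $\hat{\mathbf{K}}_k = \bar{\mathbf{K}}_i$ for any $i \in \hat{\Omega}_k$, for any $k$.
   Context: $\Sigma$ is an MJS $\mathbf{x}_{t+1}=\mathbf{A}_{\omega_t}\mathbf{x}_t+\mathbf{B}_{\omega_t}\mathbf{u}_t$ with $s$ modes and Markov matrix $\mathbf{T}$. Given a partition $\hat{\Omega}_{1:r}$ of $[s]$, the reduced MJS $\hat{\Sigma}$ has $r$ modes with $\hat{\mathbf{A}}_k,\hat{\mathbf{B}}_k$ the averages of $\mathbf{A}_i,\mathbf{B}_i$ over $i\in\hat{\Omega}_k$ and $\hat{\mathbf{T}}(k,l)=\frac{1}{|\hat{\Omega}_k|}\sum_{i\in\hat{\Omega}_k,j\in\hat{\Omega}_l}\mathbf{T}(i,j)$. The expanded MJS $\bar{\Sigma}$ has $s$ modes with $\bar{\mathbf{A}}_i=\hat{\mathbf{A}}_k$, $\bar{\mathbf{B}}_i=\hat{\mathbf{B}}_k$ for $i\in\hat{\Omega}_k$, and Markov matrix $\bar{\mathbf{T}}$ with $\sum_{j\in\hat{\Omega}_l}\bar{\mathbf{T}}(i,j)=\hat{\mathbf{T}}(k,l)$ for all $i\in\hat{\Omega}_k$. Fix cost matrices $\mathbf{Q}\succ0$,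 $\mathbf{R}\succ0$. Let $\mathbb{S}_m^+$ be the set of $m$-tuples of $n\times n$ PSD matrices. For an MJS with matrices $(\mathbf{A}_i,\mathbf{B}_i)$ and Markov matrix $\mathbf{T}$, define $\varphi_i(\mathbf{X}_{1:m})=\sum_j\mathbf{T}(i,j)\mathbf{X}_j$, $\mathcal{K}_i(\mathbf{X})=-(\mathbf{R}+\mathbf{B}_i^\top\varphi_i(\mathbf{X})\mathbf{B}_i)^{-1}\mathbf{B}_i^\top\varphi_i(\mathbf{X})\mathbf{A}_i$, and $\mathcal{R}_i(\mathbf{X})=\mathbf{Q}+\mathbf{A}_i^\top\varphi_i(\mathbf{X})\mathbf{A}_i-\mathbf{A}_i^\top\varphi_i(\mathbf{X})^\top\mathbf{B}_i(\mathbf{R}+\mathbf{B}_i^\top\varphi_i(\mathbf{X})\mathbf{B}_i)^{-1}\mathbf{B}_i^\top\varphi_i(\mathbf{X})\mathbf{A}_i$. A Riccati solution is $\mathbf{P}_{1:m}$ with $\mathbf{P}_i=\mathcal{R}_i(\mathbf{P}_{1:m})$ for all $i$ (coupled Riccati equations), and the corresponding LQR gains are $\mathbf{K}_i=\mathcal{K}_i(\mathbf{P}_{1:m})$. $\bar{\mathbf{P}}_{1:s},\bar{\mathbf{K}}_{1:s}$ denote these for $\bar{\Sigma}$ and $\hat{\mathbf{P}}_{1:r},\hat{\mathbf{K}}_{1:r}$ for $\hat{\Sigma}$. *)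

(* Defs.v *)
From HB Require Import structures.
From mathcomp Require Import all_boot all_order all_algebra.
From mathcomp Require Import reals.
Set Implicit Arguments. Unset Strict Implicit. Unset Printing Implicit Defensive.
Import Order.TTheory GRing.Theory Num.Theory.
Local Open Scope ring_scope.

Definition posdef (R : realType) (n : nat) (M : 'M[R]_n) : Prop :=
  M^T = M /\ forall x : 'cV[R]_n, x != 0 -> 0 < (x^T *m M *m x) ord0 ord0.

Definition possemidef (R : realType) (n : nat) (M : 'M[R]_n) : Prop :=
  M^T = M /\ forall x : 'cV[R]_n, 0 <= (x^T *m M *m x) ord0 ord0.

Definition markov (R : realType) (s : nat) (T : 'M[R]_s) : Prop :=
  (forall i j, 0 <= T i j) /\ (forall i, \sum_j T i j = 1).

Definition is_partition (s r : nat) (Omega : 'I_r -> {set 'I_s}) : Prop :=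
  (forall k, Omega k != set0) /\
  (forall k l, k != l -> [disjoint Omega k & Omega l]) /\
  (forall i, exists k, i \in Omega k).

Definition phi (R : realType) (n m : nat) (T : 'M[R]_m)
    (X : 'I_m -> 'M[R]_n) (i : 'I_m) : 'M[R]_n :=
  \sum_j T i j *: X j.

Definition Kgain (R : realType) (n p m : nat)
    (A : 'I_m -> 'M[R]_n) (B : 'I_m -> 'M[R]_(n, p)) (Rc : 'M[R]_p)
    (T : 'M[R]_m) (X : 'I_m -> 'M[R]_n) (i : 'I_m) : 'M[R]_(p, n) :=
  - (invmx (Rc + (B i)^T *m phi T X i *m B i) *m (B i)^T *m phi T X i *m A i).

Definition Ric (R : realType) (n p m : nat)
    (A : 'I_m -> 'M[R]_n) (B : 'I_m -> 'M[R]_(n, p)) (Q : 'M[R]_n)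
    (Rc : 'M[R]_p) (T : 'M[R]_m) (X : 'I_m -> 'M[R]_n) (i : 'I_m) : 'M[R]_n :=
  Q + (A i)^T *m phi T X i *m A i
    - (A i)^T *m (phi T X i)^T *m B i
        *m invmx (Rc + (B i)^T *m phi T X i *m B i)
        *m (B i)^T *m phi T X i *m A i.

Definition riccati_sol (R : realType) (n p m : nat)
    (A : 'I_m -> 'M[R]_n) (B : 'I_m -> 'M[R]_(n, p)) (Q : 'M[R]_n)
    (Rc : 'M[R]_p) (T : 'M[R]_m) (P : 'I_m -> 'M[R]_n) : Prop :=
  forall i, P i = Ric A B Q Rc T P i.

Definition avg_mx (R : realType) (a b s r : nat)
    (Omega : 'I_r -> {set 'I_s}) (M : 'I_s -> 'M[R]_(a, b)) (k : 'I_r)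
    : 'M[R]_(a, b) :=
  (#|Omega k|%:R)^-1 *: \sum_(i in Omega k) M i.

Definition red_T (R : realType) (s r : nat)
    (Omega : 'I_r -> {set 'I_s}) (T : 'M[R]_s) : 'M[R]_r :=
  \matrix_(k, l) ((#|Omega k|%:R)^-1 *
                  \sum_(i in Omega k) \sum_(j in Omega l) T i j).

(* Main.v *)
Require Import Defs.
From HB Require Import structures.
From mathcomp Require Import all_boot all_order all_algebra.
From mathcomp Require Import reals.
From mathcomp Require Import classical_sets boolp.
From mathcomp Require Import ring lra.
Set Implicit Arguments. Unset Strict Implicit. Unset Printing Implicit Defensive.
Import Order.TTheory GRing.Theory Num.Theory.
Local Open Scope ring_scope.

Section QF.
Variable R : realType.
Definition qf n (M : 'M[R]_n) (x : 'cV[R]_n) : R := (x^T *m M *m x) 0 0.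
Definition bf n (M : 'M[R]_n) (x y : 'cV[R]_n) : R := (x^T *m M *m y) 0 0.
Definition nx n (x : 'cV[R]_n) : R := \sum_a x a 0 ^+ 2.
Definition mnorm n (M : 'M[R]_n) : R := \sum_a \sum_b `|M a b|.

Lemma qfE n (M : 'M[R]_n) x : qf M x = \sum_a \sum_b x a 0 * M a b * x b 0.
Proof.
rewrite /qf mxE exchange_big /=; apply: eq_bigr => b _.
rewrite mxE big_distrl /=; apply: eq_bigr => a _; by rewrite !mxE.
Qed.

Lemma qfD n (M N : 'M[R]_n) x : qf (M + N) x = qf M x + qf N x.
Proof. by rewrite /qf mulmxDr mulmxDl mxE. Qed.
Lemma qfZ n (c : R) (M : 'M[R]_n) x : qf (c *: M) x = c * qf M x.
Proof. by rewrite /qf -scalemxAr -scalemxAl mxE. Qed.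
Lemma qfN n (M : 'M[R]_n) x : qf (- M) x = - qf M x.
Proof. by rewrite -scaleN1r qfZ mulN1r. Qed.
Lemma qfB n (M N : 'M[R]_n) x : qf (M - N) x = qf M x - qf N x.
Proof. by rewrite qfD qfN. Qed.
Lemma qf0 n (x : 'cV[R]_n) : qf 0 x = 0.
Proof. by rewrite /qf mulmx0 mul0mx mxE. Qed.
Lemma qf_x0 n (M : 'M[R]_n) : qf M 0 = 0.
Proof. by rewrite /qf mulmx0 mxE. Qed.
Lemma qf_sum n (I : finType) (F : I -> 'M[R]_n) x :
  qf (\sum_i F i) x = \sum_i qf (F i) x.
Proof.
elim/big_rec2: _ => [|i y M _ <-]; first by rewrite qf0.
by rewrite qfD.
Qed.
Lemma qf_mul m n (L : 'M[R]_(m, n)) (M : 'M[R]_m) x :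
  qf (L^T *m M *m L) x = qf M (L *m x).
Proof. by rewrite /qf trmx_mul !mulmxA. Qed.
Lemma qf_tr n (M : 'M[R]_n) x : qf M^T x = qf M x.
Proof.
rewrite /qf; have -> : x^T *m M^T *m x = (x^T *m M *m x)^T.
  by rewrite !trmx_mul trmxK mulmxA.
by rewrite /qf mxE.
Qed.
Lemma bf_sym n (M : 'M[R]_n) x y : M^T = M -> bf M x y = bf M y x.
Proof.
move=> HM; rewrite /bf; have -> : x^T *m M *m y = (y^T *m M *m x)^T.
  by rewrite !trmx_mul trmxK HM mulmxA.
by rewrite /bf mxE.
Qed.
Lemma qf_add n (M : 'M[R]_n) x y :
  qf M (x + y) = qf M x + bf M x y + bf M y x + qf M y.
Proof.
rewrite /qf /bf mulmxDr (raddfD trmx) /= !mulmxDl !mxE; ring.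
Qed.
Lemma trZ m n (t : R) (x : 'M[R]_(m, n)) : (t *: x)^T = t *: x^T.
Proof. by apply/matrixP => i j; rewrite !mxE. Qed.
Lemma qf_scale n (M : 'M[R]_n) (t : R) x : qf M (t *: x) = t ^+ 2 * qf M x.
Proof.
by rewrite /qf -scalemxAr trZ -!scalemxAl !mxE; ring.
Qed.
Lemma bf_scale n (M : 'M[R]_n) (t : R) x y : bf M x (t *: y) = t * bf M x y.
Proof. by rewrite /bf -scalemxAr mxE. Qed.

Lemma nx_ge0 n (x : 'cV[R]_n) : 0 <= nx x.
Proof. by apply: sumr_ge0 => a _; rewrite sqr_ge0. Qed.
Lemma nx_coord n (x : 'cV[R]_n) a : x a 0 ^+ 2 <= nx x.
Proof.
rewrite /nx (bigD1 a) //= lerDl; apply: sumr_ge0 => b _; exact: sqr_ge0.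
Qed.
Lemma mnorm_ge0 n (M : 'M[R]_n) : 0 <= mnorm M.
Proof. by apply: sumr_ge0 => a _; apply: sumr_ge0 => b _. Qed.

Lemma qf_bound n (M : 'M[R]_n) x : `|qf M x| <= mnorm M * nx x.
Proof.
rewrite qfE /mnorm big_distrl /=.
apply: (le_trans (ler_norm_sum _ _ _)); apply: ler_sum => a _.
rewrite big_distrl /=.
apply: (le_trans (ler_norm_sum _ _ _)); apply: ler_sum => b _.
have ha := nx_coord x a; have hb := nx_coord x b.
rewrite normrM normrM.
have h : `|x a 0| * `|x b 0| <= nx x.
  have h2 : 0 <= (`|x a 0| - `|x b 0|) ^+ 2 by apply: sqr_ge0.
  rewrite -(real_normK (num_real (x a 0))) in ha.
  rewrite -(real_normK (num_real (x b 0))) in hb.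
  nra.
have := normr_ge0 (M a b); have := normr_ge0 (x a 0); have := normr_ge0 (x b 0).
nra.
Qed.
Lemma qf_le_bound n (M : 'M[R]_n) x : qf M x <= mnorm M * nx x.
Proof. exact: le_trans (ler_norm _) (qf_bound M x). Qed.

Lemma cs_ineq n (Q : 'M[R]_n) x v : Q^T = Q -> (forall y, 0 <= qf Q y) ->
  0 < qf Q v -> bf Q x v ^+ 2 <= qf Q x * qf Q v.
Proof.
move=> sQ psd gp.
set b := bf Q x v; set g := qf Q v; set a := qf Q x.
pose t := - b / g.
have h := psd (x + t *: v).
rewrite qf_add (bf_sym (t *: v) x sQ) in h.
have e1 : bf Q x (t *: v) = t * b by rewrite /b /bf -scalemxAr mxE.
have e2 : qf Q (t *: v) = t ^+ 2 * g by rewrite /g qf_scale.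
rewrite e1 e2 in h.
have htg : t * g = - b by rewrite /t divfK // gt_eqF.
have h2 : 0 <= g * (a + t * b + t * b + t ^+ 2 * g).
  by apply: mulr_ge0 => //; apply: ltW.
have e : g * (a + t * b + t * b + t ^+ 2 * g) = a * g - b ^+ 2.
  have -> : g * (a + t * b + t * b + t ^+ 2 * g) =
     a * g + 2 * (t * g) * b + (t * g) ^+ 2 by ring.
  rewrite htg; ring.
rewrite e in h2; lra.
Qed.

Lemma trmx_mulself n (x : 'cV[R]_n) : (x^T *m x) 0 0 = nx x.
Proof. by rewrite mxE /nx; apply: eq_bigr => a _; rewrite mxE expr2. Qed.

Lemma pd_unit n (Q : 'M[R]_n) : (forall x, x != 0 -> 0 < qf Q x) -> Q \in unitmx.
Proof.
move=> pd; rewrite unitmxE unitfE; apply/negP => /det0P [v v0 vQ].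
have : v^T != 0 by rewrite -(inj_eq (@trmx_inj _ _ _)) trmxK linear0.
move=> /pd; rewrite /qf trmxK vQ mul0mx mxE ltxx //.
Qed.

Lemma pd_coercive n (Q : 'M[R]_n) : Q^T = Q -> (forall x, x != 0 -> 0 < qf Q x) ->
  exists2 c, 0 < c & forall x, c * nx x <= qf Q x.
Proof.
move=> sQ pd.
have psd : forall y, 0 <= qf Q y.
  by move=> y; case: (eqVneq y 0) => [->|/pd/ltW //]; rewrite /qf mulmx0 mxE.
have uQ := pd_unit pd.
set M := mnorm (invmx Q)^T.
have M0 : 0 <= M by apply: mnorm_ge0.
exists (M + 1)^-1; first by rewrite invr_gt0; lra.
move=> x; case: (eqVneq x 0) => [->|x0].
  by rewrite /nx big1 ?mulr0 ?psd // => a _; rewrite mxE expr2 mul0r.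
set v := invmx Q *m x.
have v0 : v != 0.
  apply: contraNneq x0 => hv; by rewrite -(mulKVmx uQ x) -/v hv mulmx0.
have hb : bf Q x v = nx x by rewrite /bf /v mulmxA -(mulmxA _ Q) mulmxV // mulmx1 trmx_mulself.
have hv : qf Q v <= M * nx x.
  rewrite /v -qf_mul -mulmxA mulmxV // mulmx1; exact: qf_le_bound.
have cs := cs_ineq x sQ psd (pd _ v0).
rewrite hb in cs.
have nxp : 0 < nx x.
  rewrite lt_def nx_ge0 andbT; apply: contraNneq x0 => h0.
  apply/eqP/matrixP => a b; rewrite (ord1 b) mxE.
  have := nx_coord x a; rewrite h0 => h; apply/eqP; rewrite -sqrf_eq0 eq_le sqr_ge0 h //.
have qx := psd x; have qv := psd v.
rewrite ler_pdivrMl; last by lra.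
have : nx x ^+ 2 <= qf Q x * (M * nx x).
  apply: (le_trans cs); apply: ler_wpM2l => //.
move=> h; rewrite expr2 in h.
have : nx x <= qf Q x * M.
  by rewrite -(ler_pM2r nxp) -mulrA.
nra.
Qed.
End QF.

Section CSQ.
Variable R : realType.
Variables (n p : nat) (Q : 'M[R]_n) (Rc : 'M[R]_p).

Lemma csq (A Phi : 'M[R]_n) (B : 'M[R]_(n, p)) (K : 'M[R]_(p, n)) x W Ks :
  Phi^T = Phi -> Rc^T = Rc -> W = Rc + B^T *m Phi *m B -> W \in unitmx ->
  Ks = - (invmx W *m B^T *m Phi *m A) ->
  qf Q x + qf Rc (K *m x) + qf Phi ((A + B *m K) *m x) =
  qf (Q + A^T *m Phi *m A - A^T *m Phi^T *m B *m invmx W *m B^T *m Phi *m A) x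
  + qf W ((K - Ks) *m x).
Proof.
move=> sP sR hW uW hKs.
have sW : W^T = W by rewrite hW raddfD /= sR !trmx_mul trmxK sP mulmxA.
set G := B^T *m Phi *m A.
have WKs : W *m Ks = - G.
  by rewrite hKs mulmxN !mulmxA (mulmxV uW) mul1mx.
have KsW : Ks^T *m W = - (A^T *m Phi *m B).
  rewrite -[in LHS]sW -trmx_mul WKs /G raddfN /= !trmx_mul trmxK sP mulmxA //.
have e1 : K^T *m W *m Ks = - (K^T *m G) by rewrite -mulmxA WKs mulmxN.
have e2 : Ks^T *m W *m K = - (A^T *m Phi *m B *m K) by rewrite KsW mulNmx.
have e3 : Ks^T *m W *m Ks = A^T *m Phi^T *m B *m invmx W *m B^T *m Phi *m A.
  rewrite KsW mulNmx hKs mulmxN opprK sP !mulmxA //.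
have e4 : K^T *m W *m K = K^T *m Rc *m K + K^T *m B^T *m Phi *m B *m K.
  by rewrite hW mulmxDr mulmxDl !mulmxA.
rewrite -!qf_mul.
rewrite !(raddfD trmx, raddfB trmx) /= !(mulmxDl, mulmxDr, mulmxBl, mulmxBr) !qfD ?qfN.
rewrite !(raddfN trmx) /= !(mulNmx, mulmxN) ?opprK e1 e2 e3 e4 !trmx_mul ?qfN !qfD /G !mulmxA.
lra.
Qed.
End CSQ.


Section LOP.
Variable R : realType.
Variables (n m : nat) (T : 'M[R]_m) (L : 'I_m -> 'M[R]_n).
Hypothesis Tnn : forall i j, 0 <= T i j.

Lemma qf_phi (X : 'I_m -> 'M[R]_n) i y :
  qf (phi T X i) y = \sum_j T i j * qf (X j) y.
Proof. by rewrite /phi qf_sum; apply: eq_bigr => j _; rewrite qfZ. Qed.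

Definition Lop (X : 'I_m -> 'M[R]_n) : 'I_m -> 'M[R]_n :=
  fun i => (L i)^T *m phi T X i *m L i.

Lemma qf_Lop X i x : qf (Lop X i) x = \sum_j T i j * qf (X j) (L i *m x).
Proof. by rewrite /Lop qf_mul qf_phi. Qed.

Definition qle (X Y : 'I_m -> 'M[R]_n) := forall i x, qf (X i) x <= qf (Y i) x.

Lemma Lop_mono X Y : qle X Y -> qle (Lop X) (Lop Y).
Proof.
move=> h i x; rewrite !qf_Lop; apply: ler_sum => j _.
by apply: ler_wpM2l.
Qed.

Lemma iter_mono N X Y : qle X Y -> qle (iter N Lop X) (iter N Lop Y).
Proof. by move=> h; elim: N => //= N IH; apply: Lop_mono. Qed.

Lemma iter_add N X Y i x :
  qf (iter N Lop (fun j => X j + Y j) i) x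
  = qf (iter N Lop X i) x + qf (iter N Lop Y i) x.
Proof.
elim: N i x => [|N IH] i x /=; first by rewrite qfD.
rewrite !qf_Lop -big_split /=; apply: eq_bigr => j _; by rewrite IH mulrDr.
Qed.

Lemma iter_scale N (c : R) X i x :
  qf (iter N Lop (fun j => c *: X j) i) x = c * qf (iter N Lop X i) x.
Proof.
elim: N i x => [|N IH] i x /=; first by rewrite qfZ.
rewrite !qf_Lop mulr_sumr; apply: eq_bigr => j _; rewrite IH; ring.
Qed.

Lemma iter_psd N X : (forall i x, 0 <= qf (X i) x) ->
  forall i x, 0 <= qf (iter N Lop X i) x.
Proof.
move=> h; elim: N => //= N IH i x; rewrite qf_Lop; apply: sumr_ge0 => j _.
exact: mulr_ge0.
Qed.

Lemma CL_core (Q : 'M[R]_n) c Cd (D P' : 'I_m -> 'M[R]_n) :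
  0 < c -> (forall x, c * nx x <= qf Q x) -> 0 <= Cd ->
  (forall i x, qf (D i) x <= Cd * nx x) ->
  qle D (Lop D) ->
  (forall i x, qf Q x + qf (Lop P' i) x <= qf (P' i) x) ->
  (forall i x, 0 <= qf (P' i) x) ->
  forall i x, qf (D i) x <= 0.
Proof.
move=> c0 cQ Cd0 hD hDL hP' psdP'.
pose Qc := fun _ : 'I_m => Q.
pose k := Cd / c.
have k0 : 0 <= k by apply: divr_ge0 => //; apply: ltW.
have a : forall N, qle D (iter N Lop D).
  elim=> [|N IH] //= i x; apply: (le_trans (hDL i x)); exact: Lop_mono.
have b : forall N i x, qf (iter N Lop D i) x <= k * qf (iter N Lop Qc i) x.
  move=> N i x; rewrite -iter_scale; apply: iter_mono => j y.
  apply: (le_trans (hD j y)); rewrite qfZ /Qc /k.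
  have := cQ y; have := nx_ge0 y => h1 h2.
  rewrite mulrAC ler_pdivlMr // -mulrA; apply: ler_wpM2l => //; by rewrite mulrC.
have cc : forall M i x, \sum_(l < M) qf (iter l Lop Qc i) x
     + qf (iter M Lop P' i) x <= qf (P' i) x.
  move=> M; elim: M => [|M IH] i0 x0; first by rewrite big_ord0 add0r.
  move: i0 x0 => i x.
  rewrite big_ord_recr /=.
  apply: le_trans (IH i x); rewrite -addrA lerD2l.
  have := @iter_mono M (fun j => Qc j + Lop P' j) P' _ i x.
  rewrite iter_add => h.
  have -> : Lop (iter M Lop P') = iter M Lop (Lop P') by rewrite -iterSr.
  by apply: h => j y; rewrite qfD; exact: hP'.
move=> i x; rewrite leNgt; apply/negP => dpos.
set d := qf (D i) x in dpos.
set U := qf (P' i) x.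
have U0 : 0 <= U by apply: psdP'.
pose N := (Num.bound (k * U / d)).+1.
have hN : N%:R * d <= k * U.
  have e : N%:R * d <= \sum_(l < N) qf (iter l Lop D i) x.
    have -> : N%:R * d = \sum_(l < N) d by rewrite sumr_const card_ord mulr_natl.
    by apply: ler_sum => l _; exact: a.
  apply: (le_trans e).
  apply: le_trans (_ : \sum_(l < N) k * qf (iter l Lop Qc i) x <= _).
    by apply: ler_sum => l _; apply: b.
  rewrite -mulr_sumr; apply: ler_wpM2l => //.
  rewrite /U; have := cc N i x; have := iter_psd N psdP' i x; lra.
have : k * U / d < (Num.bound (k * U / d))%:R.
  apply: archi_boundP; apply: divr_ge0; [exact: mulr_ge0|exact: ltW].
rewrite ltr_pdivrMr // => h.
have : (Num.bound (k * U / d))%:R * d < N%:R * d.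
  by rewrite ltr_pM2r // ltr_nat.
lra.
Qed.
End LOP.

Section MISC.
Variable R : realType.

Lemma bf_delta n (D : 'M[R]_n) a b :
  bf D (delta_mx a 0) (delta_mx b 0) = D a b.
Proof.
by rewrite /bf trmx_delta -rowE -colE !mxE.
Qed.

Lemma polar n (D : 'M[R]_n) a b : D^T = D ->
  D a b = (qf D (delta_mx a 0 + delta_mx b 0) - qf D (delta_mx a 0)
           - qf D (delta_mx b 0)) / 2.
Proof.
move=> sD; rewrite qf_add (bf_sym (delta_mx b 0) _ sD) bf_delta.
set u := qf D _; set v := qf D _.
have -> : u + D a b + D a b + v - u - v = D a b * 2 by ring.
by rewrite mulfK // pnatr_eq0.
Qed.

Lemma qf_inj n (M N : 'M[R]_n) : M^T = M -> N^T = N ->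
  (forall x, qf M x = qf N x) -> M = N.
Proof.
move=> sM sN h; apply/matrixP => a b.
by rewrite (polar a b sM) (polar a b sN) !h.
Qed.

Lemma eps_le (a b c : R) : 0 <= c -> (forall e, 0 < e -> a <= b + e * c) -> a <= b.
Proof.
move=> c0 h; rewrite leNgt; apply/negP => ab.
have e0 : 0 < (a - b) / (2 * (c + 1)).
  by apply: divr_gt0; lra.
have := h _ e0.
have -> : (a - b) / (2 * (c + 1)) * c = (a - b) * (c / (2 * (c + 1))).
  by rewrite mulrAC -mulrA.
have : c / (2 * (c + 1)) < 1.
  rewrite ltr_pdivrMr; lra.
have : 0 <= c / (2 * (c + 1)) by apply: divr_ge0; lra.
move=> h1 h2 h3.
have : (a - b) * (c / (2 * (c + 1))) < a - b.
  by rewrite -[X in _ < X]mulr1 ltr_pM2l //; lra.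
lra.
Qed.

Definition ev (P : nat -> Prop) := exists N0, forall N, (N0 <= N)%N -> P N.

Lemma ev_and P1 P2 : ev P1 -> ev P2 -> ev (fun N => P1 N /\ P2 N).
Proof.
move=> [N1 h1] [N2 h2]; exists (maxn N1 N2) => N hN; split.
  by apply: h1; apply: leq_trans hN; apply: leq_maxl.
by apply: h2; apply: leq_trans hN; apply: leq_maxr.
Qed.

Lemma ev_fin (I : finType) (P : I -> nat -> Prop) :
  (forall i, ev (P i)) -> ev (fun N => forall i, P i N).
Proof.
move=> h.
suff : forall s : seq I, ev (fun N => forall i, i \in s -> P i N).
  by move=> /(_ (enum I)) [N0 hN]; exists N0 => N /hN H i; apply: H; rewrite mem_enum.
elim=> [|j s [N0 IH]]; first by exists 0%N.
have [N1 h1] := h j.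
exists (maxn N0 N1) => N hN i; rewrite inE => /orP [/eqP ->|iin].
  by apply: h1; apply: leq_trans hN; apply: leq_maxr.
by apply: IH => //; apply: leq_trans hN; apply: leq_maxl.
Qed.

Lemma sup_cvg (u : nat -> R) (Bd : R) :
  (forall N, u N <= u N.+1) -> (forall N, u N <= Bd) ->
  (forall N, u N <= sup (range u)) /\
  (forall e, 0 < e -> ev (fun N => sup (range u) - e < u N)).
Proof.
move=> mono bd.
have hs : has_sup (range u).
  split; first by exists (u 0%N), 0%N.
  by exists Bd => _ [N _ <-].
split; first by move=> N; apply: sup_upper_bound => //; exists N.
move=> e e0; have [_ [N0 _ <-] h] := sup_adherent e0 hs.
exists N0 => N hN; apply: (lt_le_trans h).
elim: N hN => [|N IH]; first by rewrite leqn0 => /eqP ->.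
rewrite leq_eqVlt => /orP [/eqP ->//|]; rewrite ltnS => /IH h'.
exact: le_trans h' (mono N).
Qed.

Lemma nx_add n (u v : 'cV[R]_n) : nx (u + v) <= 2 * nx u + 2 * nx v.
Proof.
rewrite /nx !mulr_sumr -big_split /=; apply: ler_sum => a _.
rewrite mxE -subr_ge0; move: (u a 0) (v a 0) => x y.
have -> : 2 * x ^+ 2 + 2 * y ^+ 2 - (x + y) ^+ 2 = (x - y) ^+ 2 by ring.
exact: sqr_ge0.
Qed.

Lemma nx_qf1 n (u : 'cV[R]_n) : nx u = qf 1%:M u.
Proof. by rewrite /qf mulmx1 trmx_mulself. Qed.

Lemma mnorm_le n (M : 'M[R]_n) e : 0 <= e -> (forall a b, `|M a b| <= e) ->
  mnorm M <= (n * n)%:R * e.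
Proof.
move=> e0 h; rewrite /mnorm natrM -mulrA.
have -> : n%:R * (n%:R * e) = \sum_(a < n) \sum_(b < n) e.
  by rewrite !sumr_const !card_ord !mulr_natl.
by apply: ler_sum => a _; apply: ler_sum => b _.
Qed.
End MISC.

Section RIC.
Variable R : realType.
Variables (n p m : nat) (A : 'I_m -> 'M[R]_n) (B : 'I_m -> 'M[R]_(n, p))
  (Q : 'M[R]_n) (Rc : 'M[R]_p) (T : 'M[R]_m).
Hypothesis Tnn : forall i j, 0 <= T i j.
Hypothesis sQ : Q^T = Q.
Hypothesis pdQ : forall x, x != 0 -> 0 < qf Q x.
Hypothesis sR : Rc^T = Rc.
Hypothesis pdR : forall u, u != 0 -> 0 < qf Rc u.

Definition symf (X : 'I_m -> 'M[R]_n) := forall j, (X j)^T = X j.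
Definition psdf (X : 'I_m -> 'M[R]_n) := forall j y, 0 <= qf (X j) y.

Lemma psdR u : 0 <= qf Rc u.
Proof. by case: (eqVneq u 0) => [->|/pdR/ltW //]; rewrite /qf mulmx0 mxE. Qed.

Lemma phi_sym X i : symf X -> (phi T X i)^T = phi T X i.
Proof.
move=> sX; rewrite /phi raddf_sum /=; apply: eq_bigr => j _; by rewrite trZ sX.
Qed.

Lemma psd_phi X i y : psdf X -> 0 <= qf (phi T X i) y.
Proof.
move=> pX; rewrite qf_phi; apply: sumr_ge0 => j _; exact: mulr_ge0.
Qed.

Lemma W_unit X i : psdf X -> Rc + (B i)^T *m phi T X i *m B i \in unitmx.
Proof.
move=> pX; apply: pd_unit => u u0; rewrite qfD qf_mul.
have := pdR u0; have := psd_phi i (B i *m u) pX; lra.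
Qed.

Lemma ric_f X i K x : symf X -> psdf X ->
  qf Q x + qf Rc (K *m x) + qf (phi T X i) ((A i + B i *m K) *m x) =
  qf (Ric A B Q Rc T X i) x +
  qf (Rc + (B i)^T *m phi T X i *m B i) ((K - Kgain A B Rc T X i) *m x).
Proof.
move=> sX pX; rewrite /Ric.
apply: csq => //; [exact: phi_sym| exact: W_unit].
Qed.

Lemma ric_le X i K x : symf X -> psdf X ->
  qf (Ric A B Q Rc T X i) x <=
  qf Q x + qf Rc (K *m x) + qf (phi T X i) ((A i + B i *m K) *m x).
Proof.
move=> sX pX; rewrite ric_f // lerDl qfD qf_mul.
exact: addr_ge0 (psdR _) (psd_phi _ _ pX).
Qed.

Lemma ric_eq X i x : symf X -> psdf X ->
  qf (Ric A B Q Rc T X i) x =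
  qf Q x + qf Rc (Kgain A B Rc T X i *m x)
  + qf (phi T X i) ((A i + B i *m Kgain A B Rc T X i) *m x).
Proof.
move=> sX pX; by rewrite ric_f // subrr mul0mx qf_x0 addr0.
Qed.

Lemma Ric_sym X i : symf X -> (Ric A B Q Rc T X i)^T = Ric A B Q Rc T X i.
Proof.
move=> sX; have sP := phi_sym i sX.
have sW : (Rc + (B i)^T *m phi T X i *m B i)^T = Rc + (B i)^T *m phi T X i *m B i.
  by rewrite raddfD /= sR !trmx_mul trmxK sP mulmxA.
rewrite /Ric !(raddfB trmx, raddfD trmx) /= !trmx_mul !trmxK trmx_inv sW sP sQ !mulmxA.
by [].
Qed.

Lemma CL_ric (P P' : 'I_m -> 'M[R]_n) (Kp : 'I_m -> 'M[R]_(p, n)) :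
  symf P -> psdf P -> (forall i, P i = Ric A B Q Rc T P i) -> psdf P' ->
  (forall i x, qf Q x + qf Rc (Kp i *m x)
     + qf (phi T P' i) ((A i + B i *m Kp i) *m x) <= qf (P' i) x) ->
  forall i x, qf (P i) x <= qf (P' i) x.
Proof.
move=> sP pP solP pP' supP'.
have [c c0 cQ] := pd_coercive sQ pdQ.
pose L := fun i => A i + B i *m Kp i.
pose D := fun i => P i - P' i.
pose Cd := \sum_i mnorm (P i).
have Cd0 : 0 <= Cd by apply: sumr_ge0 => i _; apply: mnorm_ge0.
suff h : forall i x, qf (D i) x <= 0.
  by move=> i x; have := h i x; rewrite /D qfB; lra.
apply: (CL_core (L := L) Tnn c0 cQ Cd0 (P' := P')).
- move=> i x; rewrite /D qfB.
  have h1 := qf_le_bound (P i) x; have h2 := pP' i x.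
  have h3 : mnorm (P i) <= Cd.
    by rewrite /Cd (bigD1 i) //= lerDl; apply: sumr_ge0 => j _; apply: mnorm_ge0.
  have := nx_ge0 x => h4.
  have : mnorm (P i) * nx x <= Cd * nx x by apply: ler_wpM2r.
  lra.
- move=> i x; rewrite qf_Lop /D.
  have e : \sum_j T i j * qf (P j - P' j) (L i *m x) =
     qf (phi T P i) (L i *m x) - qf (phi T P' i) (L i *m x).
    by rewrite !qf_phi -sumrB; apply: eq_bigr => j _; rewrite qfB mulrBr.
  rewrite e qfB.
  have h1 := ric_le i (Kp i) x sP pP; rewrite -solP in h1.
  have h2 := supP' i x; rewrite /L; lra.
- move=> i x; rewrite /Lop qf_mul.
  have := supP' i x; have := psdR (Kp i *m x); rewrite /L; lra.
- exact: pP'.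
Qed.
Let Ricf := Ric A B Q Rc T.

Lemma psdQ x : 0 <= qf Q x.
Proof. by case: (eqVneq x 0) => [->|/pdQ/ltW //]; rewrite qf_x0. Qed.

Lemma ric_mono (X Y : 'I_m -> 'M[R]_n) : symf X -> psdf X -> symf Y -> psdf Y ->
  (forall j y, qf (X j) y <= qf (Y j) y) ->
  forall i x, qf (Ricf X i) x <= qf (Ricf Y i) x.
Proof.
move=> sX pX sY pY h i x.
rewrite /Ricf (ric_eq i x sY pY).
apply: le_trans (ric_le i (Kgain A B Rc T Y i) x sX pX) _.
rewrite lerD2l !qf_phi; apply: ler_sum => j _; exact: ler_wpM2l.
Qed.

Lemma ric_psd X : symf X -> psdf X -> psdf (Ricf X).
Proof.
move=> sX pX i x; rewrite /Ricf (ric_eq i x sX pX).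
apply: addr_ge0; [apply: addr_ge0; [exact: psdQ| exact: psdR]|exact: psd_phi].
Qed.

Definition VI N : 'I_m -> 'M[R]_n := iter N (fun X i => Ricf X i) (fun _ => 0).

Lemma VI_sp N : symf (VI N) /\ psdf (VI N).
Proof.
elim: N => [|N [sN pN]] /=.
  by split=> [j|j y]; rewrite ?trmx0 ?qf0.
split; first by move=> j; apply: Ric_sym.
exact: ric_psd.
Qed.

Lemma VI_mono N i x : qf (VI N i) x <= qf (VI N.+1 i) x.
Proof.
elim: N i x => [|N IH] i x.
  by rewrite /= qf0; have [_ p1] := VI_sp 1; exact: p1.
have [s1 p1] := VI_sp N; have [s2 p2] := VI_sp N.+1.
exact: ric_mono.
Qed.

Lemma VI_le N M i x : (N <= M)%N -> qf (VI N i) x <= qf (VI M i) x.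
Proof.
elim: M => [|M IH]; first by rewrite leqn0 => /eqP ->.
rewrite leq_eqVlt => /orP [/eqP ->//|]; rewrite ltnS => /IH h.
exact: le_trans h (VI_mono M i x).
Qed.


Section LIM.
Hypothesis bnd : forall i y, exists Bd, forall N, qf (VI N i) y <= Bd.

Definition sq i y := sup (range (fun N => qf (VI N i) y)).
Definition Vinf : 'I_m -> 'M[R]_n := fun i =>
  \matrix_(a, b) ((sq i (delta_mx a 0 + delta_mx b 0) - sq i (delta_mx a 0)
                   - sq i (delta_mx b 0)) / 2).

Lemma sq_props i y : (forall N, qf (VI N i) y <= sq i y) /\
  (forall e, 0 < e -> ev (fun N => sq i y - e < qf (VI N i) y)).
Proof.
have [Bd hb] := bnd i y.
exact: (sup_cvg (fun N => VI_mono N i y) hb).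
Qed.

Lemma Vinf_sym : symf Vinf.
Proof.
move=> i; apply/matrixP => a b; rewrite !mxE (addrC (delta_mx b 0)).
set u := sq i _; set v := sq i _; set w := sq i _; lra.
Qed.

Lemma Vinf_entry e : 0 < e ->
  ev (fun N => forall i a b, `|Vinf i a b - VI N i a b| <= 2 * e).
Proof.
move=> e0; apply: ev_fin => i; apply: ev_fin => a; apply: ev_fin => b.
have [u1 c1] := sq_props i (delta_mx a 0 + delta_mx b 0).
have [u2 c2] := sq_props i (delta_mx a 0).
have [u3 c3] := sq_props i (delta_mx b 0).
have [N0 h] := ev_and (c1 e e0) (ev_and (c2 e e0) (c3 e e0)).
exists N0 => N hN; have [h1 [h2 h3]] := h N hN.
have [sN _] := VI_sp N.
rewrite mxE (polar a b (sN i)).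
have := u1 N; have := u2 N; have := u3 N.
move: h1 h2 h3.
set s1 := sq i _; set s2 := sq i _; set s3 := sq i _.
set q1 := qf _ _; set q2 := qf _ _; set q3 := qf _ _.
move=> h1 h2 h3 h4 h5 h6.
rewrite ler_norml; apply/andP; split; lra.
Qed.

Lemma Vinf_mnorm e : 0 < e ->
  ev (fun N => forall i, mnorm (Vinf i - VI N i) <= (n * n)%:R * (2 * e)).
Proof.
move=> e0; have [N0 h] := Vinf_entry e0; exists N0 => N hN i.
apply: mnorm_le; first by apply: mulr_ge0 => //; apply: ltW.
by move=> a b; have := h N hN i a b; rewrite !mxE.
Qed.

Lemma qf_diff_bound (M1 M2 : 'M[R]_n) x :
  qf M2 x <= qf M1 x + mnorm (M1 - M2) * nx x /\
  qf M1 x <= qf M2 x + mnorm (M1 - M2) * nx x.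
Proof.
have := qf_bound (M1 - M2) x; rewrite qfB ler_norml => /andP [h1 h2]; split; lra.
Qed.

Let cst := (n * n)%:R * 2 : R.
Lemma cst_ge0 : 0 <= cst.
Proof. by rewrite /cst; apply: mulr_ge0 => //; apply: ler0n. Qed.

Lemma Vinf_ge N i x : qf (VI N i) x <= qf (Vinf i) x.
Proof.
apply: (@eps_le _ _ _ (cst * nx x)).
  by apply: mulr_ge0; [exact: cst_ge0 | exact: nx_ge0].
move=> e e0; have [N0 h] := Vinf_mnorm e0.
have hM := h (maxn N N0) (leq_maxr _ _).
have := VI_le i x (leq_maxl N N0).
have [h1 _] := qf_diff_bound (Vinf i) (VI (maxn N N0) i) x.
have : mnorm (Vinf i - VI (maxn N N0) i) * nx x <= (n * n)%:R * (2 * e) * nx x.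
  by apply: ler_wpM2r => //; exact: nx_ge0.
have -> : (n * n)%:R * (2 * e) * nx x = e * (cst * nx x) by rewrite /cst; ring.
lra.
Qed.

Lemma Vinf_le i x Bd : (forall N, qf (VI N i) x <= Bd) -> qf (Vinf i) x <= Bd.
Proof.
move=> hb; apply: (@eps_le _ _ _ (cst * nx x)).
  by apply: mulr_ge0; [exact: cst_ge0 | exact: nx_ge0].
move=> e e0; have [N0 h] := Vinf_mnorm e0.
have hM := h N0 (leqnn _).
have := hb N0.
have [_ h1] := qf_diff_bound (Vinf i) (VI N0 i) x.
have : mnorm (Vinf i - VI N0 i) * nx x <= (n * n)%:R * (2 * e) * nx x.
  by apply: ler_wpM2r => //; exact: nx_ge0.
have -> : (n * n)%:R * (2 * e) * nx x = e * (cst * nx x) by rewrite /cst; ring.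
lra.
Qed.

Lemma Vinf_psd : psdf Vinf.
Proof. by move=> i x; have := Vinf_ge 0 i x; rewrite /= qf0. Qed.


Lemma Vinf_super i x : qf (Ricf Vinf i) x <= qf (Vinf i) x.
Proof.
have [cR cR0 hcR] := pd_coercive sR pdR.
set V := qf (Vinf i) x.
pose Tsum := \sum_k \sum_j T k j.
have Ts0 : 0 <= Tsum by apply: sumr_ge0 => k _; apply: sumr_ge0 => j _.
have Tle : \sum_j T i j <= Tsum.
  by rewrite /Tsum [X in _ <= X](bigD1 i) //= lerDl; apply: sumr_ge0 => k _; apply: sumr_ge0.
pose G := mnorm ((B i)^T *m 1%:M *m B i).
have G0 : 0 <= G by apply: mnorm_ge0.
pose beta := V / cR.
pose Gam := 2 * nx (A i *m x) + 2 * (G * beta).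
apply: (@eps_le _ _ _ (cst * Tsum * Gam)).
  have V0 : 0 <= V by apply: Vinf_psd.
  have b0 : 0 <= beta by apply: divr_ge0 => //; apply: ltW.
  apply: mulr_ge0; first by apply: mulr_ge0 => //; exact: cst_ge0.
  rewrite /Gam; apply: addr_ge0; apply: mulr_ge0 => //; [exact: nx_ge0|exact: mulr_ge0].
move=> e e0; have [N h] := Vinf_mnorm e0.
have hm := h N (leqnn _).
have [sN pN] := VI_sp N.
set K := Kgain A B Rc T (VI N) i.
set L := A i + B i *m K.
have h1 := ric_le i K x Vinf_sym Vinf_psd.
have h2 : qf (VI N.+1 i) x = qf Q x + qf Rc (K *m x) + qf (phi T (VI N) i) (L *m x).
  exact: (ric_eq i x sN pN).
have h3 : qf (VI N.+1 i) x <= V by apply: Vinf_ge.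
set c0 := (n * n)%:R * (2 * e).
have c00 : 0 <= c0 by apply: mulr_ge0; [apply: ler0n| apply: mulr_ge0 => //; apply: ltW].
have h4 : forall y, qf (phi T Vinf i) y - qf (phi T (VI N) i) y <= Tsum * c0 * nx y.
  move=> y; rewrite !qf_phi -sumrB.
  apply: le_trans (_ : \sum_j T i j * (c0 * nx y) <= _).
    apply: ler_sum => j _; rewrite -mulrBr; apply: ler_wpM2l => //.
    rewrite -qfB; apply: le_trans (qf_le_bound _ _) _.
    by apply: ler_wpM2r; [exact: nx_ge0| exact: hm].
  rewrite -big_distrl /= mulrA; apply: ler_wpM2r.
    exact: nx_ge0.
  exact: ler_wpM2r.
have hK : nx (K *m x) <= beta.
  rewrite /beta ler_pdivlMr // mulrC.
  apply: le_trans (hcR _) _.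
  have := psdQ x; have := psd_phi i (L *m x) pN; lra.
have h5 : nx (L *m x) <= Gam.
  rewrite /L mulmxDl -mulmxA.
  apply: le_trans (nx_add _ _) _; rewrite /Gam lerD2l ler_wpM2l //.
  rewrite nx_qf1 -qf_mul; apply: le_trans (qf_le_bound _ _) _.
  exact: ler_wpM2l.
have h6 : Tsum * c0 * nx (L *m x) <= Tsum * c0 * Gam.
  by apply: ler_wpM2l => //; apply: mulr_ge0.
have h7 := h4 (L *m x).
have -> : e * (cst * Tsum * Gam) = Tsum * c0 * Gam by rewrite /c0 /cst; ring.
lra.
Qed.
End LIM.
End RIC.

Unset Implicit Arguments.
Theorem lemma3 (R : realType) (n p s r : nat)
  (A : 'I_s -> 'M[R]_n) (B : 'I_s -> 'M[R]_(n, p)) (T : 'M[R]_s)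
  (Q : 'M[R]_n) (Rc : 'M[R]_p) (Omega : 'I_r -> {set 'I_s})
  (Abar : 'I_s -> 'M[R]_n) (Bbar : 'I_s -> 'M[R]_(n, p)) (Tbar : 'M[R]_s)
  (Pbar : 'I_s -> 'M[R]_n) :
  markov T ->
  is_partition Omega ->
  posdef Q -> posdef Rc ->
  (* expanded MJS *)
  (forall k i, i \in Omega k ->
     Abar i = avg_mx Omega A k /\ Bbar i = avg_mx Omega B k) ->
  markov Tbar ->
  (forall k l i, i \in Omega k ->
     \sum_(j in Omega l) Tbar i j = red_T Omega T k l) ->
  (* a positive definite Riccati solution of the expanded MJS *)
  riccati_sol Abar Bbar Q Rc Tbar Pbar ->
  (forall i, posdef (Pbar i)) ->
  exists Phat : 'I_r -> 'M[R]_n,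
    [/\ (forall k, possemidef (Phat k)),
        riccati_sol (avg_mx Omega A) (avg_mx Omega B) Q Rc (red_T Omega T) Phat,
        (forall Phat' : 'I_r -> 'M[R]_n,
           (forall k, possemidef (Phat' k)) ->
           riccati_sol (avg_mx Omega A) (avg_mx Omega B) Q Rc (red_T Omega T) Phat' ->
           forall k, Phat' k = Phat k)
      & (forall k i, i \in Omega k ->
           Phat k = Pbar i /\
           Kgain (avg_mx Omega A) (avg_mx Omega B) Rc (red_T Omega T) Phat k
             = Kgain Abar Bbar Rc Tbar Pbar i)].
Proof.
move=> [Tnn _] [Hne [Hdis Hcov]] [sQ pdQ0] [sR pdR0] hAB [Tbnn _] hTb solP pdP.
have pdQ : forall x, x != 0 -> 0 < qf Q x by exact: pdQ0.
have pdR : forall u, u != 0 -> 0 < qf Rc u by exact: pdR0.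
set Ah := avg_mx Omega A; set Bh := avg_mx Omega B; set Th := red_T Omega T.
have [cls hcls] : exists cls : 'I_s -> 'I_r, forall i, i \in Omega (cls i).
  by exists (fun i => xchoose (Hcov i)) => i; exact: (xchooseP (Hcov i)).
have memcls : forall i k, (i \in Omega k) = (cls i == k).
  move=> i k; case: (eqVneq (cls i) k) => [<-|ne]; first exact: hcls.
  exact: disjointFr (Hdis _ _ ne) (hcls i).
have Thnn : forall k l, 0 <= Th k l.
  move=> k l; rewrite /Th /red_T mxE; apply: mulr_ge0; first by rewrite invr_ge0 ler0n.
  by apply: sumr_ge0 => i _; apply: sumr_ge0 => j _; apply: Tnn.
have phi_lift : forall (X : 'I_r -> 'M[R]_n) i,
    phi Tbar (fun j => X (cls j)) i = phi Th X (cls i).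
  move=> X i; rewrite /phi (partition_big cls predT) //=.
  apply: eq_bigr => l _; rewrite -(hTb (cls i) l i (hcls i)) scaler_suml.
  by apply: eq_big => [j|j /eqP ->] //; rewrite memcls.
have Ric_lift : forall (X : 'I_r -> 'M[R]_n) i,
    Ric Abar Bbar Q Rc Tbar (fun j => X (cls j)) i = Ric Ah Bh Q Rc Th X (cls i).
  by move=> X i; rewrite /Ric phi_lift; have [-> ->] := hAB _ _ (hcls i).
have K_lift : forall (X : 'I_r -> 'M[R]_n) i,
    Kgain Abar Bbar Rc Tbar (fun j => X (cls j)) i = Kgain Ah Bh Rc Th X (cls i).
  by move=> X i; rewrite /Kgain phi_lift; have [-> ->] := hAB _ _ (hcls i).
have sP : symf Pbar by move=> i; case: (pdP i).
have pP : psdf Pbar.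
  move=> i y; case: (eqVneq y 0) => [->|y0]; first by rewrite qf_x0.
  by apply: ltW; case: (pdP i) => _; apply.
have VIbar : forall N i y, qf (VI Ah Bh Q Rc Th N (cls i)) y <= qf (Pbar i) y.
  elim=> [|N IH] i y; first by rewrite /= qf0; apply: pP.
  have [sN pN] := VI_sp Ah Bh Thnn sQ pdQ sR pdR N.
  have -> : VI Ah Bh Q Rc Th N.+1 (cls i) = Ric Ah Bh Q Rc Th (VI Ah Bh Q Rc Th N) (cls i)
    by [].
  rewrite -Ric_lift (solP i).
  apply: (@ric_mono R n p s Abar Bbar Q Rc Tbar Tbnn sR pdR
            (fun j => VI Ah Bh Q Rc Th N (cls j)) Pbar) => //.
have bnd : forall k y, exists Bd, forall N, qf (VI Ah Bh Q Rc Th N k) y <= Bd.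
  move=> k y; have /set0Pn [i ik] := Hne k.
  exists (qf (Pbar i) y) => N; rewrite memcls in ik; rewrite -(eqP ik); exact: VIbar.
set V := Vinf Ah Bh Q Rc Th.
have sV : symf V := Vinf_sym Ah Bh Q Rc Th.
have pV : psdf V := Vinf_psd Thnn sQ pdQ sR pdR bnd.
have sVl : symf (fun j => V (cls j)) by move=> j; apply: sV.
have pVl : psdf (fun j => V (cls j)) by move=> j; apply: pV.
have hP : forall i, Pbar i = V (cls i).
  move=> i; apply: qf_inj => // x; apply/eqP; rewrite eq_le; apply/andP; split.
    apply: (CL_ric Tbnn sQ pdQ sR pdR (P' := fun j => V (cls j))
             (Kp := Kgain Abar Bbar Rc Tbar (fun j => V (cls j)))) => // j y.
    rewrite -(ric_eq Abar Bbar Q Tbnn sR pdR j y sVl pVl) Ric_lift.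
    exact: (Vinf_super Thnn sQ pdQ sR pdR bnd).
  by apply: (Vinf_le Thnn sQ pdQ sR pdR bnd) => N; apply: VIbar.
have hl : (fun j => V (cls j)) = Pbar by apply: funext => j; rewrite hP.
have solV : forall k, V k = Ric Ah Bh Q Rc Th V k.
  move=> k; have /set0Pn [i ik] := Hne k; rewrite memcls in ik; rewrite -(eqP ik).
  by rewrite -Ric_lift hl -solP hP.
exists V; split.
- by move=> k; split; [apply: sV | move=> x; apply: pV].
- exact: solV.
- move=> P2 hP2 sol2 k.
  have sP2 : symf P2 by move=> j; case: (hP2 j).
  have pP2 : psdf P2 by move=> j y; case: (hP2 j) => _; apply.
  apply: qf_inj => // x; apply/eqP; rewrite eq_le; apply/andP; split.
    apply: (CL_ric Thnn sQ pdQ sR pdR (P' := V) (Kp := Kgain Ah Bh Rc Th V)) => // j y.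
    by rewrite -(ric_eq Ah Bh Q Thnn sR pdR j y sV pV) -solV.
  apply: (CL_ric Thnn sQ pdQ sR pdR (P' := P2) (Kp := Kgain Ah Bh Rc Th P2)) => // j y.
  by rewrite -(ric_eq Ah Bh Q Thnn sR pdR j y sP2 pP2) -sol2.
- move=> k i ik; rewrite memcls in ik; rewrite -(eqP ik) hP; split => //.
  by rewrite -hl K_lift.
Qed.
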